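(* Let $n$ be a non-zero integer, taken in canonical form. Then $n+(-n)\triangleq 1+(-1)\cong\{-1\mid 1\}$.
   Context: Games are short normal-play combinatorial games, written $G\cong\{L(G)\mid R(G)\}$, $\cong$ meaning identical literal forms. Canonical integers: $0\cong\{\ \mid\ \}$, $n\cong\{n-1\mid\ \}$ for $n>0$, $n\cong\{\ \mid n+1\}$ for $n<0$. Disjunctive sum $G+H\cong\{L(G)+H,G+L(H)\mid R(G)+H,G+R(H)\}$, negation $-G\cong\{-R(G)\mid -L(G)\}$. Equivalence modulo domination: $G\triangleq H$ means that in $G+(-H)$, for every move by either player as first player in one summand, the other player has a response in the other summand after which the responder wins. *)

(* Defs.v *)
From mathcomp Require Import all_boot all_order all_algebra.
From Stdlib Require List.
Set Implicit Arguments. Unset Strict Implicit. Unset Printing Implicit Defensive.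

Inductive game : Type := Game : seq game -> seq game -> game.

Definition lefts (g : game) : seq game := let: Game l _ := g in l.
Definition rights (g : game) : seq game := let: Game _ r := g in r.

Fixpoint outcome (g : game) : bool * bool :=
  let: Game l r := g in
  (has id (map (fun x => ~~ (outcome x).2) l),
   has id (map (fun x => ~~ (outcome x).1) r)).

Definition left_wins_first (g : game) : bool := (outcome g).1.
Definition right_wins_first (g : game) : bool := (outcome g).2.
(* The player who has just moved wins iff the opponent, moving first, does not. *)
Definition left_wins_second (g : game) : bool := ~~ right_wins_first g.
Definition right_wins_second (g : game) : bool := ~~ left_wins_first g.

Fixpoint neg (g : game) : game :=
  let: Game l r := g in Game (map neg r) (map neg l).

Fixpoint sum (g : game) : game -> game :=
  fix sumg (h : game) : game :=
    let: Game gl gr := g in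
    let: Game hl hr := h in
    Game (map (fun x => sum x h) gl ++ map sumg hl)
         (map (fun x => sum x h) gr ++ map sumg hr).

Fixpoint pos_game (k : nat) : game :=
  if k is k'.+1 then Game [:: pos_game k'] [::] else Game [::] [::].
Fixpoint neg_game (k : nat) : game :=
  if k is k'.+1 then Game [::] [:: neg_game k'] else Game [::] [::].
Definition int_game (z : int) : game :=
  match z with
  | Posz k => pos_game k
  | Negz k => neg_game k.+1
  end.

(* Equivalence modulo domination, G ≜ H, read off literally on G + (-H):
   every first move by either player in one summand admits a response by the
   other player in the other summand after which the responder wins (the
   opponent being next to move). *)
Definition dom_equiv (g h : game) : Prop :=
  (forall gl, List.In gl (lefts g) ->
     exists2 nhr, List.In nhr (rights (neg h)) & right_wins_second (sum gl nhr)) /\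
  (forall gr, List.In gr (rights g) ->
     exists2 nhl, List.In nhl (lefts (neg h)) & left_wins_second (sum gr nhl)) /\
  (forall nhl, List.In nhl (lefts (neg h)) ->
     exists2 gr, List.In gr (rights g) & right_wins_second (sum gr nhl)) /\
  (forall nhr, List.In nhr (rights (neg h)) ->
     exists2 gl, List.In gl (lefts g) & left_wins_second (sum gl nhr)).

(* Main.v *)
Require Import Defs.
From mathcomp Require Import all_boot all_order all_algebra.
From mathcomp Require Import zify.
From Stdlib Require List.
Import GRing.Theory Num.Theory.

Inductive IS : game -> int -> nat -> Prop :=
| ISp k : IS (pos_game k) (Posz k) k
| ISn k : IS (neg_game k) (- (Posz k))%R k
| ISs g h v w m m' : IS g v m -> IS h w m' -> IS (sum g h) (v + w)%R (m + m').

Arguments ISs {g h v w m m'}.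
Lemma IS_eq g v m v' m' : IS g v m -> v = v' -> m = m' -> IS g v' m'.
Proof. by move=> H <- <-. Qed.
Arguments IS_eq {g v m v' m'}.

Lemma lefts_sum g h : lefts (sum g h) = map (fun x => sum x h) (lefts g) ++ map (sum g) (lefts h).
Proof. by case: g => ? ?; case: h. Qed.
Lemma rights_sum g h : rights (sum g h) = map (fun x => sum x h) (rights g) ++ map (sum g) (rights h).
Proof. by case: g => ? ?; case: h. Qed.

Lemma neg_pos k : neg (pos_game k) = neg_game k.
Proof. by elim: k => //= k ->. Qed.
Lemma neg_neg k : neg (neg_game k) = pos_game k.
Proof. by elim: k => //= k ->. Qed.

Lemma opts g v m : IS g v m ->
  (forall x, List.In x (lefts g) -> 0 < m /\ IS x (v - 1)%R m.-1) /\
  (forall x, List.In x (rights g) -> 0 < m /\ IS x (v + 1)%R m.-1) /\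
  ((0 < v)%R -> 0 < size (lefts g)) /\ ((v < 0)%R -> 0 < size (rights g)).
Proof.
elim=> [k|k|g' h v' w m0 m1 Hg [L1 [R1 [SL1 SR1]]] Hh [L2 [R2 [SL2 SR2]]]].
- case: k => [|k] /=; first by split=> //; split=> //.
  split; first by move=> x [<-|[]]; split=> //; apply: IS_eq (ISp k) _ _; lia.
  by split=> // _ [].
- case: k => [|k] /=; first by split=> //; split=> //.
  split; first by move=> x [].
  split; first by move=> x [<-|[]]; split=> //; apply: IS_eq (ISn k) _ _; lia.
  by split=> //; lia.
- rewrite lefts_sum rights_sum !size_cat !size_map.
  split.
    move=> x /List.in_app_iff [/List.in_map_iff [y [<- Hy]]|/List.in_map_iff [y [<- Hy]]].
      have [Hm Hs] := L1 _ Hy; split; first lia.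
      by apply: (IS_eq (ISs Hs Hh)); lia.
    have [Hm Hs] := L2 _ Hy; split; first lia.
    by apply: (IS_eq (ISs Hg Hs)); lia.
  split.
    move=> x /List.in_app_iff [/List.in_map_iff [y [<- Hy]]|/List.in_map_iff [y [<- Hy]]].
      have [Hm Hs] := R1 _ Hy; split; first lia.
      by apply: (IS_eq (ISs Hs Hh)); lia.
    have [Hm Hs] := R2 _ Hy; split; first lia.
    by apply: (IS_eq (ISs Hg Hs)); lia.
  split=> Hv.
    case: (ltrP 0 v') => H1; first by have := SL1 H1; lia.
    have : (0 < w)%R by lia.
    by move/SL2; lia.
  case: (ltrP v' 0) => H1; first by have := SR1 H1; lia.
  have : (w < 0)%R by lia.
  by move/SR2; lia.
Qed.

Lemma has_const (f : game -> bool) b l :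
  (forall x, List.In x l -> f x = b) -> has id (map f l) = b && (0 < size l).
Proof.
elim: l => [|a l IH] H /=; first by rewrite andbF.
rewrite H; last by left.
by case: b H IH => H IH //=; rewrite IH // => x Hx; apply: H; right.
Qed.

Lemma outcome_IS N g v m : m <= N -> IS g v m -> outcome g = ((0 < v)%R, (v < 0)%R).
Proof.
elim: N g v m => [|N IH] [l r] v m Hm HI; have [L [R [SL SR]]] := opts _ _ _ HI; rewrite /=.
- have l0 : l = [::] by case: l L {HI SL SR R} => // a l /(_ a (or_introl erefl)) [] ; lia.
  have r0 : r = [::] by case: r R {HI SR SL L} => // a r /(_ a (or_introl erefl)) [] ; lia.
  subst l r; rewrite /= in SL SR.
  by congr pair; apply/esym/negbTE; apply/negP => /[dup] ? ; [move/SL|move/SR].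
- rewrite (@has_const _ (~~ ((v - 1) < 0)%R)); last first.
    move=> x Hx; have [Hm0 Hx'] := L _ Hx; by rewrite (IH _ _ _ _ Hx') //; lia.
  rewrite (@has_const _ (~~ (0 < (v + 1))%R)); last first.
    move=> x Hx; have [Hm0 Hx'] := R _ Hx; by rewrite (IH _ _ _ _ Hx') //; lia.
  simpl in SL, SR.
  congr pair.
    case: (ltrP 0 v) => H; first by rewrite (SL H) andbT; lia.
    by apply/negbTE; lia.
  case: (ltrP v 0) => H; first by rewrite (SR H) andbT; lia.
  by apply/negbTE; lia.
Qed.

Lemma out g v m : IS g v m -> outcome g = ((0 < v)%R, (v < 0)%R).
Proof. exact: outcome_IS (leqnn m). Qed.
Arguments out {g v m}.

Lemma H1 : sum (int_game 1%R) (neg (int_game 1%R)) = Game [:: int_game (-1)%R] [:: int_game 1%R].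
Proof. by []. Qed.

Theorem lemma3p1 (n : int) (hn : n != 0%R) :
  dom_equiv (sum (int_game n) (neg (int_game n)))
            (sum (int_game 1%R) (neg (int_game 1%R))) /\
  sum (int_game 1%R) (neg (int_game 1%R)) = Game [:: int_game (-1)%R] [:: int_game 1%R].
Proof.
split; last exact: H1.
have NH : neg (sum (int_game 1%R) (neg (int_game 1%R))) = Game [:: neg_game 1] [:: pos_game 1] by [].
rewrite /dom_equiv NH.
case: n hn => [[|k]|k] // _.
- have EG : sum (int_game (Posz k.+1)) (neg (int_game (Posz k.+1))) =
    Game [:: sum (pos_game k) (neg_game k.+1)] [:: sum (pos_game k.+1) (neg_game k)].
    by rewrite /int_game neg_pos.
  rewrite EG.
  split.
    move=> x [<-|[]]; exists (pos_game 1); first by left.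
    by rewrite /right_wins_second /left_wins_first (out (ISs (ISs (ISp k) (ISn k.+1)) (ISp 1))) /=; lia.
  split.
    move=> x [<-|[]]; exists (neg_game 1); first by left.
    by rewrite /left_wins_second /right_wins_first (out (ISs (ISs (ISp k.+1) (ISn k)) (ISn 1))) /=; lia.
  split.
    move=> x [<-|[]]; exists (sum (pos_game k.+1) (neg_game k)); first by left.
    by rewrite /right_wins_second /left_wins_first (out (ISs (ISs (ISp k.+1) (ISn k)) (ISn 1))) /=; lia.
  move=> x [<-|[]]; exists (sum (pos_game k) (neg_game k.+1)); first by left.
    by rewrite /left_wins_second /right_wins_first (out (ISs (ISs (ISp k) (ISn k.+1)) (ISp 1))) /=; lia.
- have EG : sum (int_game (Negz k)) (neg (int_game (Negz k))) =
    Game [:: sum (neg_game k.+1) (pos_game k)] [:: sum (neg_game k) (pos_game k.+1)].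
    by rewrite /int_game neg_neg.
  rewrite EG.
  split.
    move=> x [<-|[]]; exists (pos_game 1); first by left.
    by rewrite /right_wins_second /left_wins_first (out (ISs (ISs (ISn k.+1) (ISp k)) (ISp 1))) /=; lia.
  split.
    move=> x [<-|[]]; exists (neg_game 1); first by left.
    by rewrite /left_wins_second /right_wins_first (out (ISs (ISs (ISn k) (ISp k.+1)) (ISn 1))) /=; lia.
  split.
    move=> x [<-|[]]; exists (sum (neg_game k) (pos_game k.+1)); first by left.
    by rewrite /right_wins_second /left_wins_first (out (ISs (ISs (ISn k) (ISp k.+1)) (ISn 1))) /=; lia.
  move=> x [<-|[]]; exists (sum (neg_game k.+1) (pos_game k)); first by left.
    by rewrite /left_wins_second /right_wins_first (out (ISs (ISs (ISn k.+1) (ISp k)) (ISp 1))) /=; lia.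
Qed.
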